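(* Let $R$ be a ring, $G$ a group and $A$ an $RG$-module. Then $\mathbf{Coc}_{R\text{-mmx}}(G) = \{x \in G \mid A/C_A(x) \text{ is a minimax } R\text{-module}\}$ is a normal subgroup of $G$.
   Context: An $R$-module is minimax if it has a finite series of submodules whose factors are each noetherian or artinian. For $x \in G$, $C_A(x) = \{a\in A \mid ax = a\}$. *)

(* Defs.v *)
From HB Require Import structures.
From mathcomp Require Import all_boot all_algebra.

Set Implicit Arguments.
Unset Strict Implicit.
Unset Printing Implicit Defensive.

Import GRing.Theory.
Local Open Scope ring_scope.

Section Modules.
Variables (R : pzRingType) (M : lmodType R).

Definition incl (U V : M -> Prop) : Prop := forall x, U x -> V x.

(* R-submodule of M. (Closure under opposites follows from scaling by -1.) *)
Definition submodule (U : M -> Prop) : Prop :=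
  [/\ U 0, (forall u v, U u -> U v -> U (u + v))
     & (forall (r : R) u, U u -> U (r *: u))].

(* Submodules of
   U/V are identified (correspondence theorem) with submodules W of M
   such that V <= W <= U. *)
Definition noetherian_factor (V U : M -> Prop) : Prop :=
  forall W : nat -> M -> Prop,
    (forall n, [/\ submodule (W n), incl V (W n) & incl (W n) U]) ->
    (forall n, incl (W n) (W n.+1)) ->
    exists N, forall n, (N <= n)%N -> incl (W n) (W N).

Definition artinian_factor (V U : M -> Prop) : Prop :=
  forall W : nat -> M -> Prop,
    (forall n, [/\ submodule (W n), incl V (W n) & incl (W n) U]) ->
    (forall n, incl (W n.+1) (W n)) ->
    exists N, forall n, (N <= n)%N -> incl (W N) (W n).

Definition minimax_module : Prop :=
  exists (n : nat) (S : nat -> M -> Prop),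
    [/\ forall i, submodule (S i),
        forall x, S 0%N x <-> x = 0,
        forall x, S n x
      & forall i, (i < n)%N ->
          incl (S i) (S i.+1) /\
          (noetherian_factor (S i) (S i.+1) \/ artinian_factor (S i) (S i.+1))].

End Modules.

(* The quotient R-module A/C (C a submodule of A) is minimax: there is an
   R-module M and a surjective R-linear map f : A -> M with kernel C
   (i.e. M is A/C up to isomorphism) such that M is minimax. *)
Definition quotient_minimax (R : pzRingType) (A : lmodType R) (C : A -> Prop)
  : Prop :=
  exists (M : lmodType R) (f : {linear A -> M}),
    [/\ forall m : M, exists a : A, f a = m,
        forall a : A, f a = 0 <-> C a
      & minimax_module M].

(* A is an RG-module: a (right) action of the group G on the R-module A by
   R-linear maps, written a |-> act a g (= a g). *)
Definition RG_module (R : pzRingType) (G : groupType) (A : lmodType R)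
  (act : A -> G -> A) : Prop :=
  [/\ forall a, act a 1%g = a,
      forall a (g h : G), act a (g * h)%g = act (act a g) h
    & forall (g : G) (r : R) (a b : A), act (r *: a + b) g = r *: act a g + act b g].

Definition centralizer_in (R : pzRingType) (G : groupType) (A : lmodType R)
  (act : A -> G -> A) (x : G) : A -> Prop := fun a => act a x = a.

Definition Coc_mmx (R : pzRingType) (G : groupType) (A : lmodType R)
  (act : A -> G -> A) : G -> Prop :=
  fun x => quotient_minimax (centralizer_in act x).

Definition normal_subgroup (G : groupType) (S : G -> Prop) : Prop :=
  [/\ S 1%g,
      forall x y, S x -> S y -> S (x * y)%g,
      forall x, S x -> S (x^-1)%g
    & forall x g, S x -> S (x ^ g)%g].

(* Main.v *)
Require Import Defs.
From HB Require Import structures.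
From mathcomp Require Import all_boot all_algebra.
From Stdlib Require Import ClassicalEpsilon.
Set Implicit Arguments. Unset Strict Implicit. Unset Printing Implicit Defensive.
Import GRing.Theory.
Local Open Scope ring_scope.

Definition pb (P : Prop) : bool := if excluded_middle_informative P then true else false.
Lemma pbP (P : Prop) : reflect P (pb P).
Proof. rewrite /pb; case: excluded_middle_informative => h; by constructor. Qed.

Section SubM.
Variables (R : pzRingType) (A : lmodType R) (g : A -> A).
Hypothesis glin : forall (r : R) a b, g (r *: a + b) = r *: g a + g b.
Definition imP : A -> Prop := fun b => exists a, g a = b.
Lemma g0 : g 0 = 0.
Proof. have h := glin 1 0 0; rewrite !scale1r addr0 in h.
by move/(congr1 (fun x => x - g 0)): h; rewrite subrr addrK. Qed.
Definition subP : A -> bool := fun a => pb (imP a).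
Lemma subP_closed : subsemimod_closed subP.
Proof.
split; first split.
- by apply/pbP; exists 0; rewrite g0.
- move=> u v /pbP [a <-] /pbP [b <-]; apply/pbP; exists (a + b).
  by have := glin 1 a b; rewrite !scale1r.
- move=> r u /pbP [a <-]; apply/pbP; exists (r *: a).
  by rewrite -[r *: a]addr0 glin g0 addr0.
Qed.
HB.instance Definition _ := GRing.isSubmodClosed.Build R A subP subP_closed.
Definition subM := {x : A | subP x}.
HB.instance Definition _ := [isSub of subM for (@sval A subP)].
HB.instance Definition _ := [Choice of subM by <:].
HB.instance Definition _ := [SubChoice_isSubLmodule of subM by <:].
Lemma subP_g a : subP (g a). Proof. by apply/pbP; exists a. Qed.
Definition fq (a : A) : subM := exist _ (g a) (subP_g a).
Lemma fq_lin : linear fq.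
Proof. move=> r a b; apply: val_inj => /=. by rewrite glin. Qed.
HB.instance Definition _ := GRing.isLinear.Build R A subM *:%R fq fq_lin.
Lemma quot_exists : exists f : {linear A -> subM},
  (forall m, exists a, f a = m) /\ (forall a, f a = 0 <-> g a = 0).
Proof.
exists fq; split.
- move=> [m hm]; case/pbP: (hm) => a ha; exists a; apply: val_inj => /=. exact: ha.
- move=> a; split => [/(congr1 val) //|h]; apply: val_inj => /=. exact: h.
Qed.
End SubM.


Section Theory.
Variable R : pzRingType.

Definition btw (M : lmodType R) (V U W : M -> Prop) :=
  [/\ submodule W, incl V W & incl W U].

Lemma sub_subr (M : lmodType R) (P : M -> Prop) u v :
  submodule P -> P u -> P v -> P (u - v).
Proof. case=> h0 hD hZ hu hv; apply: hD => //; rewrite -scaleN1r; exact: hZ. Qed.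

Lemma transfer_noeth (M M' : lmodType R) (V U : M -> Prop) (V' U' : M' -> Prop)
  (F : (M' -> Prop) -> (M -> Prop)) :
  (forall W, btw V' U' W -> btw V U (F W)) ->
  (forall W1 W2, btw V' U' W1 -> btw V' U' W2 -> incl W1 W2 -> incl (F W1) (F W2)) ->
  (forall W1 W2, btw V' U' W1 -> btw V' U' W2 -> incl (F W1) (F W2) -> incl W1 W2) ->
  noetherian_factor V U -> noetherian_factor V' U'.
Proof.
move=> hb hm hr hN W hW hc.
have hW' n : btw V' U' (W n) by case: (hW n).
have [N hN'] := hN (fun n => F (W n)) (fun n => hb _ (hW' n)) (fun n => hm _ _ (hW' n) (hW' n.+1) (hc n)).
exists N => n hn; apply: hr (hW' _) (hW' _) _; exact: hN'.
Qed.

Lemma transfer_art (M M' : lmodType R) (V U : M -> Prop) (V' U' : M' -> Prop)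
  (F : (M' -> Prop) -> (M -> Prop)) :
  (forall W, btw V' U' W -> btw V U (F W)) ->
  (forall W1 W2, btw V' U' W1 -> btw V' U' W2 -> incl W1 W2 -> incl (F W1) (F W2)) ->
  (forall W1 W2, btw V' U' W1 -> btw V' U' W2 -> incl (F W1) (F W2) -> incl W1 W2) ->
  artinian_factor V U -> artinian_factor V' U'.
Proof.
move=> hb hm hr hN W hW hc.
have hW' n : btw V' U' (W n) by case: (hW n).
have [N hN'] := hN (fun n => F (W n)) (fun n => hb _ (hW' n)) (fun n => hm _ _ (hW' n.+1) (hW' n) (hc n)).
exists N => n hn; apply: hr (hW' _) (hW' _) _; exact: hN'.
Qed.

Lemma transfer_both (M M' : lmodType R) (V U : M -> Prop) (V' U' : M' -> Prop)
  (F : (M' -> Prop) -> (M -> Prop)) :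
  (forall W, btw V' U' W -> btw V U (F W)) ->
  (forall W1 W2, btw V' U' W1 -> btw V' U' W2 -> incl W1 W2 -> incl (F W1) (F W2)) ->
  (forall W1 W2, btw V' U' W1 -> btw V' U' W2 -> incl (F W1) (F W2) -> incl W1 W2) ->
  (noetherian_factor V U \/ artinian_factor V U) ->
  (noetherian_factor V' U' \/ artinian_factor V' U').
Proof.
move=> h1 h2 h3 [h|h]; [left; exact: (transfer_noeth h1 h2 h3 h) | right; exact: (transfer_art h1 h2 h3 h)].
Qed.

Lemma factor_ext (M : lmodType R) (V U V' U' : M -> Prop) :
  (forall x, V x <-> V' x) -> (forall x, U x <-> U' x) ->
  (noetherian_factor V U \/ artinian_factor V U) ->
  (noetherian_factor V' U' \/ artinian_factor V' U').
Proof.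
move=> eV eU; apply: (transfer_both (F := id)) => //.
move=> W [h1 h2 h3]; split => // x hx.
- by apply: h2; apply/eV.
- by apply/eU; apply: h3.
Qed.

Definition minimaxP (M : lmodType R) (V U : M -> Prop) : Prop :=
  exists (n : nat) (S : nat -> M -> Prop),
    [/\ forall i, submodule (S i),
        forall x, S 0%N x <-> V x,
        forall x, S n x <-> U x
      & forall i, (i < n)%N ->
          incl (S i) (S i.+1) /\
          (noetherian_factor (S i) (S i.+1) \/ artinian_factor (S i) (S i.+1))].

Lemma minimaxP_ext (M : lmodType R) (V U V' U' : M -> Prop) :
  (forall x, V x <-> V' x) -> (forall x, U x <-> U' x) ->
  minimaxP V U -> minimaxP V' U'.
Proof.
move=> eV eU [n [S [h1 h2 h3 h4]]]; exists n, S; split => // x.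
- by rewrite h2 eV.
- by rewrite h3 eU.
Qed.

Lemma minimax_moduleP (M : lmodType R) :
  minimax_module M <-> minimaxP (fun x : M => x = 0) (fun _ => True).
Proof.
split.
- move=> [n [S [h1 h2 h3 h4]]]; exists n, S; split => // x; by split.
- move=> [n [S [h1 h2 h3 h4]]]; exists n, S; split => // x; by apply/h3.
Qed.

Lemma minimaxP_refl (M : lmodType R) (U : M -> Prop) : submodule U -> minimaxP U U.
Proof. by move=> hU; exists 0%N, (fun _ => U); split. Qed.

End Theory.

Section T.
Variable R : pzRingType.

Lemma submoduleI (M : lmodType R) (P Q : M -> Prop) :
  submodule P -> submodule Q -> submodule (fun x => P x /\ Q x).
Proof.
case=> a0 aD aZ [b0 bD bZ]; split => //.
- by move=> u v [? ?] [? ?]; split; [apply: aD | apply: bD].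
- by move=> r u [? ?]; split; [apply: aZ | apply: bZ].
Qed.

Definition sumP (M : lmodType R) (P Q : M -> Prop) : M -> Prop :=
  fun x => exists u v, [/\ P u, Q v & x = u + v].

Lemma submoduleS (M : lmodType R) (P Q : M -> Prop) :
  submodule P -> submodule Q -> submodule (sumP P Q).
Proof.
case=> a0 aD aZ [b0 bD bZ]; split.
- by exists 0, 0; rewrite addr0.
- move=> _ _ [u [v [hu hv ->]]] [u' [v' [hu' hv' ->]]].
  exists (u + u'), (v + v'); split; [exact: aD | exact: bD | ].
  by rewrite addrACA.
- move=> r _ [u [v [hu hv ->]]]; exists (r *: u), (r *: v); split;
  [exact: aZ | exact: bZ | by rewrite scalerDr].
Qed.

Lemma minimaxP_inter (M : lmodType R) (V U K : M -> Prop) : submodule K ->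
  minimaxP V U -> minimaxP (fun x => V x /\ K x) (fun x => U x /\ K x).
Proof.
move=> hK [n [S [h1 h2 h3 h4]]].
exists n, (fun i x => S i x /\ K x); split.
- by move=> i; apply: submoduleI.
- by move=> x; rewrite h2.
- by move=> x; rewrite h3.
move=> i hi; have [hinc hf] := h4 i hi; split.
  by move=> x [? ?]; split => //; apply: hinc.
apply: (transfer_both (F := fun W => sumP W (S i))) hf.
- move=> W [hW hVW hWU]; split.
  + exact: submoduleS.
  + move=> x hx; exists 0, x; split => //; last by rewrite add0r.
    by case: hW.
  + move=> _ [u [v [hu hv ->]]]; case: (h1 i.+1) => _ hD _; apply: hD.
      by case: (hWU u hu).
    exact: hinc.
- move=> W1 W2 _ _ h12 _ [u [v [hu hv ->]]]; exists u, v; split => //; exact: h12.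
- move=> W1 W2 [hW1 hV1 hU1] [hW2 hV2 hU2] h12 w hw.
  have [u [v [hu hv e]]] : sumP W2 (S i) w.
    apply: h12; exists w, 0; split => //; [by case: (h1 i) | by rewrite addr0].
  have hvK : K v.
    have -> : v = w - u by rewrite e addrAC subrr add0r.
    apply: sub_subr => //; [exact: (hU1 _ hw).2 | exact: (hU2 _ hu).2].
  rewrite e; case: hW2 => _ hD _; apply: hD => //; exact: hV2.
Qed.

Lemma minimaxP_quot (M : lmodType R) (V U V' : M -> Prop) : submodule V' ->
  incl V V' -> incl V' U -> minimaxP V U -> minimaxP V' U.
Proof.
move=> hV' hVV' hV'U [n [S [h1 h2 h3 h4]]].
exists n, (fun i => sumP (S i) V'); split.
- by move=> i; apply: submoduleS.
- move=> x; split.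
  + move=> [u [v [hu hv ->]]]; case: hV' => _ hD _; apply: hD => //.
    by apply: hVV'; apply/h2.
  + move=> hx; exists 0, x; split => //; [by case: (h1 0%N) | by rewrite add0r].
- move=> x; split.
  + move=> [u [v [hu hv ->]]]; apply/h3; case: (h1 n) => _ hD _; apply: hD => //.
    by apply/h3; apply: hV'U.
  + move=> hx; exists x, 0; split; [by apply/h3 | by case: hV' | by rewrite addr0].
move=> i hi; have [hinc hf] := h4 i hi; split.
  by move=> _ [u [v [hu hv ->]]]; exists u, v; split => //; apply: hinc.
apply: (transfer_both (F := fun W x => W x /\ S i.+1 x)) hf.
- move=> W [hW hVW hWU]; split.
  + by apply: submoduleI.
  + move=> x hx; split; last exact: hinc.
    apply: hVW; exists x, 0; split => //; [by case: hV' | by rewrite addr0].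
  + by move=> x [].
- by move=> W1 W2 _ _ h12 x [hx hx']; split => //; apply: h12.
- move=> W1 W2 [hW1 hV1 hU1] [hW2 hV2 hU2] h12 w hw.
  have [u [v [hu hv e]]] := hU1 w hw.
  have hvW : forall W, incl (sumP (S i) V') W -> W v.
    move=> W hW; apply: hW; exists 0, v; split => //; [by case: (h1 i) | by rewrite add0r].
  have huW1 : W1 u.
    have -> : u = w - v by rewrite e addrK.
    apply: sub_subr => //; exact: hvW.
  have [hu2 _] := h12 u (conj huW1 hu).
  rewrite e; case: hW2 => _ hD _; apply: hD => //; exact: hvW.
Qed.

End T.

Section T.
Variable R : pzRingType.

Lemma minimaxP_trans (M : lmodType R) (V U X : M -> Prop) :
  minimaxP V U -> minimaxP U X -> minimaxP V X.
Proof.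
move=> [n [S [h1 h2 h3 h4]]] [m [T [k1 k2 k3 k4]]].
exists (n + m)%N, (fun i => if (i < n)%N then S i else T (i - n)%N); split.
- by move=> i; case: ifP.
- move=> x; case: (posnP n) => [n0|np].
  + subst n; rewrite /= subn0 k2 -h3; exact: h2.
  + exact: h2.
- move=> x; rewrite ltnNge leq_addr /= addKn; exact: k3.
move=> i hi /=; case: (ltnP i.+1 n) => hi1.
  by rewrite (ltnW hi1); apply: h4; apply: ltnW.
case: (ltnP i n) => hi0.
  have ein : i.+1 = n by apply/eqP; rewrite eqn_leq hi1 hi0.
  rewrite ein subnn; have [hinc hf] := h4 i hi0; rewrite ein in hinc hf; split.
    by move=> x hx; apply/k2/h3; apply: hinc.
  apply: factor_ext hf => // x; by rewrite h3 k2.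
rewrite subSn //.
apply: k4; by rewrite ltn_subLR // addnC.
Qed.

Lemma minimaxP_pull (A M : lmodType R) (f : A -> M) (V U : M -> Prop) :
  (forall (r : R) a b, f (r *: a + b) = r *: f a + f b) ->
  (forall m, exists a, f a = m) ->
  minimaxP V U -> minimaxP (fun a => V (f a)) (fun a => U (f a)).
Proof.
move=> flin fsurj [n [S [h1 h2 h3 h4]]].
have f0 : f 0 = 0.
  have h := flin 1 0 0; rewrite !scale1r addr0 in h.
  by move/(congr1 (fun x => x - f 0)): h; rewrite subrr addrK.
have fD a b : f (a + b) = f a + f b by have := flin 1 a b; rewrite !scale1r.
have fZ r a : f (r *: a) = r *: f a by rewrite -[r *: a]addr0 flin f0 addr0.
have fB a b : f (a - b) = f a - f b by rewrite -!scaleN1r fD fZ.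
have subf P : submodule P -> submodule (fun a => P (f a)).
  case=> p0 pD pZ; split; [by rewrite f0 | move=> u v hu hv; rewrite fD; exact: pD |
    move=> r u hu; rewrite fZ; exact: pZ].
exists n, (fun i a => S i (f a)); split.
- by move=> i; apply: subf.
- by move=> x; exact: h2.
- by move=> x; exact: h3.
move=> i hi; have [hinc hf] := h4 i hi; split.
  by move=> x hx; apply: hinc.
apply: (transfer_both (F := fun W m => exists a, W a /\ f a = m)) hf.
- move=> W [[w0 wD wZ] hVW hWU]; split.
  + split; first by exists 0.
    * by move=> _ _ [a [ha <-]] [b [hb <-]]; exists (a + b); rewrite fD; split => //; apply: wD.
    * by move=> r _ [a [ha <-]]; exists (r *: a); rewrite fZ; split => //; apply: wZ.
  + move=> m hm; have [a ha] := fsurj m; exists a; split => //; apply: hVW; by rewrite ha.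
  + by move=> _ [a [ha <-]]; apply: hWU.
- by move=> W1 W2 _ _ h12 _ [a [ha <-]]; exists a; split => //; apply: h12.
- move=> W1 W2 [hW1 hV1 hU1] [hW2 hV2 hU2] h12 w hw.
  have [u [hu e]] := h12 (f w) (ex_intro _ w (conj hw erefl)).
  have hd : W2 (w - u).
    apply: hV2 => /=; rewrite fB e subrr; by case: (h1 i).
  have -> : w = (w - u) + u by rewrite subrK.
  case: hW2 => _ hD _; exact: hD.
Qed.

Lemma minimaxP_push (A M : lmodType R) (f : A -> M) (V : A -> Prop) :
  (forall (r : R) a b, f (r *: a + b) = r *: f a + f b) ->
  (forall m, exists a, f a = m) ->
  (forall a, f a = 0 <-> V a) ->
  minimaxP V (fun _ => True) -> minimax_module M.
Proof.
move=> flin fsurj fker [n [S [h1 h2 h3 h4]]].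
have f0 : f 0 = 0.
  have h := flin 1 0 0; rewrite !scale1r addr0 in h.
  by move/(congr1 (fun x => x - f 0)): h; rewrite subrr addrK.
have fD a b : f (a + b) = f a + f b by have := flin 1 a b; rewrite !scale1r.
have fZ r a : f (r *: a) = r *: f a by rewrite -[r *: a]addr0 flin f0 addr0.
have imS P : submodule P -> submodule (fun m => exists a, P a /\ f a = m).
  case=> w0 wD wZ; split; first by exists 0.
    * by move=> _ _ [a [ha <-]] [b [hb <-]]; exists (a + b); rewrite fD; split => //; apply: wD.
    * by move=> r _ [a [ha <-]]; exists (r *: a); rewrite fZ; split => //; apply: wZ.
exists n, (fun i m => exists a, S i a /\ f a = m); split.
- by move=> i; apply: imS.
- move=> x; split.
  + by move=> [a [ha <-]]; apply/fker/h2.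
  + by move=> ->; exists 0; split => //; case: (h1 0%N).
- move=> x; have [a <-] := fsurj x; exists a; split => //; exact/h3.
move=> i hi; have [hinc hf] := h4 i hi; split.
  by move=> _ [a [ha <-]]; exists a; split => //; apply: hinc.
apply: (transfer_both (F := fun W a => W (f a) /\ S i.+1 a)) hf.
- move=> W [[w0 wD wZ] hVW hWU]; split.
  + split; first by rewrite f0; split => //; case: (h1 i.+1).
    * move=> u v [hu hu'] [hv hv']; rewrite fD; split; first exact: wD.
      by case: (h1 i.+1) => _ hD _; apply: hD.
    * move=> r u [hu hu']; rewrite fZ; split; first exact: wZ.
      by case: (h1 i.+1) => _ _ hZ; apply: hZ.
  + move=> a ha; split; last exact: hinc.
    by apply: hVW; exists a.
  + by move=> a [].
- by move=> W1 W2 _ _ h12 a [ha ha']; split => //; apply: h12.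
- move=> W1 W2 [hW1 hV1 hU1] [hW2 hV2 hU2] h12 m hm.
  have [a [ha e]] := hU1 m hm; subst m.
  by case: (h12 a (conj hm ha)).
Qed.

End T.

Lemma qm_to_P (R : pzRingType) (A : lmodType R) (C : A -> Prop) :
  quotient_minimax C -> minimaxP C (fun _ => True).
Proof.
move=> [M [f [fs fk mm]]].
have := minimaxP_pull (linearP f) fs (proj1 (minimax_moduleP M) mm).
by apply: minimaxP_ext.
Qed.

Lemma P_to_qm (R : pzRingType) (A : lmodType R) (C : A -> Prop) (g : A -> A)
  (glin : forall (r : R) a b, g (r *: a + b) = r *: g a + g b) :
  (forall a, g a = 0 <-> C a) -> minimaxP C (fun _ => True) -> quotient_minimax C.
Proof.
move=> gk hm; have [f [fs fk]] := quot_exists glin.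
have fk' a : f a = 0 <-> C a by rewrite fk gk.
exists (subM g), f; split => //.
exact: (minimaxP_push (linearP f) fs fk' hm).
Qed.

Theorem corollary2p4 (R : pzRingType) (G : groupType) (A : lmodType R)
  (act : A -> G -> A) :
  RG_module act -> normal_subgroup (Coc_mmx act).
Proof.
move=> [a1 aM aL].
have act0 g : act 0 g = 0.
  have h := aL g 1 0 0; rewrite !scale1r addr0 in h.
  by move/(congr1 (fun x => x - act 0 g)): h; rewrite subrr addrK.
have actD g a b : act (a + b) g = act a g + act b g by have := aL g 1 a b; rewrite !scale1r.
have actZ g r a : act (r *: a) g = r *: act a g by rewrite -[r *: a]addr0 aL act0 addr0.
have actK g a : act (act a g) (g^-1)%g = a by rewrite -aM mulgV a1.
have actVK g a : act (act a (g^-1)%g) g = a by rewrite -aM mulVg a1.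
pose gx (x : G) (a : A) := act a x - a.
have gxlin x : forall (r : R) a b, gx x (r *: a + b) = r *: gx x a + gx x b.
  by move=> r a b; rewrite /gx aL scalerBr opprD addrACA.
have gxk x a : gx x a = 0 <-> centralizer_in act x a.
  by rewrite /gx /centralizer_in; split => [/eqP|->]; [rewrite subr_eq0 => /eqP | rewrite subrr].
have csub x : submodule (centralizer_in act x).
  rewrite /centralizer_in; split.
  - exact: act0.
  - by move=> u v hu hv; rewrite actD hu hv.
  - by move=> r u hu; rewrite actZ hu.
have cocP x : Coc_mmx act x <-> minimaxP (centralizer_in act x) (fun _ => True).
  split; first exact: qm_to_P.
  exact: (P_to_qm (gxlin x) (gxk x)).
have tsub : submodule (fun _ : A => True) by split.
split.
- apply/cocP; apply: (minimaxP_ext (V := fun _ => True) (U := fun _ => True)) => //.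
    by move=> a; rewrite /centralizer_in a1.
  exact: minimaxP_refl.
- move=> x y /cocP hx /cocP hy; apply/cocP.
  have h1 := minimaxP_inter (csub y) hx.
  have h2 : minimaxP (fun a => centralizer_in act x a /\ centralizer_in act y a)
                     (centralizer_in act y).
    by apply: minimaxP_ext h1 => // a; split => [[]|].
  have h3 := minimaxP_trans h2 hy.
  apply: (minimaxP_quot (csub (x * y)%g) _ _ h3) => //.
  by move=> a [hax hay]; rewrite /centralizer_in aM hax hay.
- move=> x /cocP hx; apply/cocP; apply: minimaxP_ext hx => // a.
  rewrite /centralizer_in; split => h.
  + by rewrite -{1}h actK.
  + by rewrite -{1}h actVK.
- move=> x g /cocP hx; apply/cocP.
  have hp := minimaxP_pull (f := fun a => act a (g^-1)%g) (fun r a b => aL _ r a b)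
    (fun m => ex_intro _ (act m g) (actK g m)) hx.
  apply: minimaxP_ext hp => // a; rewrite /centralizer_in conjgE; split => h.
  + by rewrite !aM h actVK.
  + rewrite -{2}h -!aM; congr (act a _); by rewrite -mulgA -mulgA mulgV mulg1.
Qed.
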